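(* Let $d\in[n]$, let every $v_j$ be $d$-self-bounding, fix $\mathbf s$, rename bidders so that $v_1(\mathbf s)\ge\cdots\ge v_n(\mathbf s)>0$, and let $k=\max\{i:v_i(\mathbf s)>v_1(\mathbf s)/2\}$. For each $i\in[n]$ define $$A_i=\frac{\log_2^\dagger\big(v_1(\mathbf s)/\underline v_1^{(i)}(\mathbf s)\big)}{k+1}+\sum_{j=1}^k\frac{\log_2^\dagger\big(v_j(\mathbf s)/\underline v_j^{(i)}(\mathbf s)\big)}{j(j+1)}.$$ Then $\sum_{i=1}^nA_i\le 2d$.
   Context: Signals $s_i\in S_i\subseteq\mathbb R$, $\mathbf S=S_1\times\cdots\times S_n$, valuations $v_j:\mathbf S\to\mathbb R_{>0}$. Lower estimates: $\underline v_j^{(i)}(\mathbf s)=\inf_{o_i\in S_i}v_j(o_i,\mathbf s_{-i})$. $v$ is $d$-self-bounding if $\sum_{i=1}^n(v(\mathbf s)-\inf_{o_i}v(o_i,\mathbf s_{-i}))\le d\,v(\mathbf s)$ for all $\mathbf s$. $\log_2^\dagger(\alpha)=\max(0,\min(1,\log_2\alpha))$, with $a/0=\infty$, $\log_2\infty=\infty$. *)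

(* Defs.v *)
From mathcomp Require Import all_boot all_order all_algebra.
From mathcomp Require Import all_classical all_reals all_analysis.
Set Implicit Arguments. Unset Strict Implicit. Unset Printing Implicit Defensive.
Import Order.TTheory GRing.Theory Num.Theory.
Local Open Scope classical_set_scope.
Local Open Scope ring_scope.

Section Defs.
Variable R : realType.

Definition upd n (s : 'I_n -> R) (i : 'I_n) (o : R) : 'I_n -> R :=
  fun j => if j == i then o else s j.

Definition lower_est n (S : 'I_n -> set R) (v : ('I_n -> R) -> R)
  (i : 'I_n) (s : 'I_n -> R) : R :=
  inf [set v (upd s i o) | o in S i].

Definition self_bounding n (S : 'I_n -> set R) (v : ('I_n -> R) -> R) (d : R) :=
  forall s : 'I_n -> R, (forall i, S i (s i)) ->
    \sum_(i < n) (v s - lower_est S v i s) <= d * v s.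

Definition log2 (x : R) : R := ln x / ln 2.

(* log2^dagger (a / b), with a / 0 = +oo and log2 +oo = +oo  (a > 0, b >= 0) *)
Definition log2dag_ratio (a b : R) : R :=
  if b == 0 then 1 else Num.max 0 (Num.min 1 (log2 (a / b))).

End Defs.

(* Main.v *)
Require Import Defs.
From mathcomp Require Import all_boot all_order all_algebra.
From mathcomp Require Import all_classical all_reals all_analysis.
From mathcomp Require Import ring lra.
Import Order.TTheory GRing.Theory Num.Theory.
Local Open Scope classical_set_scope.
Local Open Scope ring_scope.


Section Aux.
Variable R : realType.

Lemma key_ln (x : R) : 2^-1 <= x -> x <= 1 -> - (2 * (1 - x) * ln 2) <= ln x.
Proof.
move=> h1 h2.
have t0 : 0 <= 2 * (1 - x) by rewrite mulr_ge0 // subr_ge0.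
have t1 : 2 * (1 - x) <= 1.
  have : 2 * 2^-1 = 1 :> R by rewrite mulfV.
  move=> e; nra.
have := @concave_ln R (Itv01 t0 t1) (2^-1) 1 ltac:(by []) ltr01.
rewrite !convRE /=.
have -> : 2 * (1 - x) / 2 + unstable.onem (2 * (1 - x)) * 1 = x.
  by rewrite /unstable.onem mulr1 mulrAC mulfV ?mul1r //; ring.
rewrite ln1 mulr0 addr0.
by rewrite lnV ?posrE // mulrN -mulNr.
Qed.

Lemma log2dag_le (v u : R) : 0 < v -> 0 <= u -> u <= v ->
  log2dag_ratio v u <= 2 * (v - u) / v.
Proof.
move=> v0 u0 uv; rewrite /log2dag_ratio.
have vu0 : 0 <= 2 * (v - u) / v by apply: divr_ge0; [apply: mulr_ge0; rewrite ?subr_ge0 // | apply: ltW].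
case: eqP => [->|/eqP un0].
  by rewrite subr0 mulfK ?gt_eqF // ler1n.
have up : 0 < u by rewrite lt_neqAle eq_sym un0.
case: (leP u (v / 2)) => hu.
  rewrite ge_max vu0 /= ge_min; apply/orP; left.
  rewrite ler_pdivlMr // mul1r.
  have : 2 * u <= v by rewrite mulrC -ler_pdivlMr.
  move=> h; lra.
rewrite ge_max vu0 /= ge_min; apply/orP; right.
rewrite /log2.
have l2 : 0 < ln (2:R) by rewrite ln_gt0 // ltr1n.
rewrite ler_pdivrMr //.
have hx1 : 2^-1 <= u / v.
  by rewrite ler_pdivlMr // mulrC ltW.
have hx2 : u / v <= 1 by rewrite ler_pdivrMr // mul1r.
have := @key_ln _ hx1 hx2.
rewrite -[v / u]invf_div lnV ?posrE ?divr_gt0 //.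
have -> : 2 * (1 - u / v) = 2 * (v - u) / v.
  by rewrite mulrBr mulr1 -mulrA mulrBl mulfV ?gt_eqF //; rewrite mulrBr mulr1.
lra.
Qed.

Lemma tele (n k : nat) :
  \sum_(j < n | (j < k)%N) (((j.+1 * j.+2)%N)%:R : R)^-1
   = 1 - (((minn n k).+1)%:R)^-1.
Proof.
elim: n => [|n IH].
  by rewrite big_ord0 min0n invr1 subrr.
rewrite big_mkcond big_ord_recr /= -big_mkcond IH.
case: (ltnP n k) => h.
  rewrite (minn_idPl h) natrM.
  have h1 : (n.+1%:R : R) != 0 by rewrite pnatr_eq0.
  have h2 : (n.+1%:R + 1 : R) != 0 by rewrite -(natrD R n.+1 1) addn1 pnatr_eq0.
  rewrite -[n.+2]addn1 natrD.
  move: h1 h2; set a := (n.+1)%:R => h1 h2; field.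
  have := ler0n R n => n0.
  by rewrite gt_eqF ?gt_eqF //; lra.
have -> : minn n.+1 k = k by apply/minn_idPr; exact: leqW h.
by rewrite addr0.
Qed.

Lemma lower_bounds n (S : 'I_n -> set R) (w : ('I_n -> R) -> R) (s : 'I_n -> R) i :
  (forall t : 'I_n -> R, (forall i, S i (t i)) -> 0 < w t) ->
  (forall i, S i (s i)) ->
  0 <= lower_est S w i s /\ lower_est S w i s <= w s.
Proof.
move=> hw hs.
have Su : forall o, S i o -> forall j, S j (upd s i o j).
  by move=> o So j; rewrite /upd; case: eqP => [->|].
have ews : upd s i (s i) = s.
  by apply: funext => j; rewrite /upd; case: eqP => [->|].
have Ew : [set w (upd s i o) | o in S i] (w s).
  by exists (s i); [apply: hs | rewrite ews].
have lb0 : lbound [set w (upd s i o) | o in S i] 0.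
  by move=> y [z Sz <-]; apply: ltW; apply: hw; exact: Su.
split.
  by apply: lb_le_inf => //; exists (w s).
by apply: (ge_inf _ Ew); exists 0.
Qed.

Lemma sum_log_le n (S : 'I_n -> set R) (w : ('I_n -> R) -> R) (s : 'I_n -> R) (d : R) :
  (forall t : 'I_n -> R, (forall i, S i (t i)) -> 0 < w t) ->
  (forall i, S i (s i)) -> self_bounding S w d ->
  \sum_(i < n) log2dag_ratio (w s) (lower_est S w i s) <= 2 * d.
Proof.
move=> hw hs hsb.
have w0 : 0 < w s by apply: hw.
apply: (@le_trans _ _ (\sum_(i < n) (w s - lower_est S w i s) * (2 / w s))).
  apply: ler_sum => i _.
  have [h1 h2] := @lower_bounds _ S w s i hw hs.
  by rewrite mulrA [_ * 2]mulrC log2dag_le.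
rewrite -mulr_suml.
apply: (@le_trans _ _ (d * w s * (2 / w s))).
  rewrite ler_wpM2r //; [by rewrite divr_ge0 // ltW | exact: hsb].
by rewrite -mulrA [w s * _]mulrCA mulfV ?gt_eqF // mulr1 mulrC.
Qed.
End Aux.

Lemma gen (R : realType) (n : nat) (d : nat)
  (S : 'I_n -> set R) (v : 'I_n -> ('I_n -> R) -> R) (s : 'I_n -> R) (k : nat) (j0 : 'I_n) :
  (forall j (t : 'I_n -> R), (forall i, S i (t i)) -> 0 < v j t) ->
  (forall j, self_bounding S (v j) d%:R) ->
  (forall i, S i (s i)) ->
  \sum_(i < n) (log2dag_ratio (v j0 s) (lower_est S (v j0) i s) / (k.+1)%:R
    + \sum_(j < n | (j < k)%N)
        log2dag_ratio (v j s) (lower_est S (v j) i s) / ((j.+1 * j.+2)%N)%:R)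
  <= 2 * d%:R.
Proof.
move=> hpos hsb hs.
have hv : forall j, \sum_(i < n) log2dag_ratio (v j s) (lower_est S (v j) i s)
   <= 2 * d%:R.
  by move=> j; apply: sum_log_le => //; apply: hpos.
rewrite big_split /=.
apply: (@le_trans _ _ (2 * d%:R * (k.+1%:R)^-1 +
   \sum_(j < n | (j < k)%N) 2 * d%:R * (((j.+1 * j.+2)%N)%:R)^-1)).
  apply: lerD.
    by rewrite -mulr_suml ler_wpM2r // ?invr_ge0 ?ler0n //; apply: hv.
  rewrite exchange_big /=; apply: ler_sum => j _.
  by rewrite -mulr_suml ler_wpM2r // ?invr_ge0 ?ler0n //; apply: hv.
rewrite -mulr_sumr -mulrDr tele.
rewrite -[X in _ <= X]mulr1 ler_wpM2l ?mulr_ge0 ?ler0n //.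
rewrite addrCA -[X in _ <= X]addr0 lerD2l subr_le0.
by rewrite lef_pV2 ?posrE ?ltr0Sn // ler_nat ltnS geq_minr.
Qed.

(* Bidders are 'I_n (0-based: bidder j+1 of the paper is j); bidder 1 is (Ordinal hn). *)
Theorem mainTheorem11 (R : realType) (n : nat) (hn : (0 < n)%N) (d : nat)
  (S : 'I_n -> set R) (v : 'I_n -> ('I_n -> R) -> R) (s : 'I_n -> R)
  (hd : (1 <= d <= n)%N)
  (hpos : forall j (t : 'I_n -> R), (forall i, S i (t i)) -> 0 < v j t)
  (hsb : forall j, self_bounding S (v j) d%:R)
  (hs : forall i, S i (s i))
  (hsorted : forall j1 j2 : 'I_n, (j1 <= j2)%N -> v j2 s <= v j1 s) :
  let v1 := v (Ordinal hn) s in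
  let k : nat := \max_(i < n | v1 / 2 < v i s) (i : nat).+1 in
  let A := fun i : 'I_n =>
    log2dag_ratio v1 (lower_est S (v (Ordinal hn)) i s) / (k.+1)%:R
    + \sum_(j < n | (j < k)%N)
        log2dag_ratio (v j s) (lower_est S (v j) i s) / ((j.+1 * j.+2)%N)%:R in
  \sum_(i < n) A i <= 2 * d%:R.
Proof.
exact: (@gen R n d S v s (\max_(i < n | v (Ordinal hn) s / 2 < v i s) (i : nat).+1) (Ordinal hn) hpos hsb hs).
Qed.
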